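(* Let $\mathcal{Z}=\{\boldsymbol{z}_1,\dots,\boldsymbol{z}_N\}\subset\mathbb{R}^d$ and let $\boldsymbol{z}$ be uniformly distributed on $\mathcal{Z}$, i.e. $\mathbb{P}(\boldsymbol{z}=\boldsymbol{z}_i)=1/N$. Let $\boldsymbol{U}\subset[N]$ be a random index set of size $b$ sampled uniformly without replacement, and let $\boldsymbol{V}\subset[N]$ be a random index set of size $N-1$ sampled uniformly without replacement, independent of $\boldsymbol{U}$. For an index set $I$ let $\bar{\mathcal{Z}}_I$ be the average of $\{\boldsymbol{z}_i:i\in I\}$. Then $$\mathbb{E}_{\boldsymbol{U},\boldsymbol{V}}\left(\frac{(b-|\boldsymbol{U}\cap\boldsymbol{V}|)^2}{b^2}(\bar{\mathcal{Z}}_{\boldsymbol{V}}-\bar{\mathcal{Z}}_{\boldsymbol{U}\cap\boldsymbol{V}^c})(\bar{\mathcal{Z}}_{\boldsymbol{V}}-\bar{\mathcal{Z}}_{\boldsymbol{U}\cap\boldsymbol{V}^c})^\top\right)=\frac{1}{Nb}\left(\frac{N}{N-1}\right)^2\mathrm{Cov}(\boldsymbol{z}).$$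
   Context: $\boldsymbol{V}^c=[N]\setminus\boldsymbol{V}$. When $\boldsymbol{U}\cap\boldsymbol{V}^c=\emptyset$ the prefactor $(b-|\boldsymbol{U}\cap\boldsymbol{V}|)^2/b^2$ is $0$ and the integrand is taken to be $0$. $\mathrm{Cov}(\boldsymbol{z})=\frac1N\sum_i(\boldsymbol{z}_i-\bar{\boldsymbol{z}})(\boldsymbol{z}_i-\bar{\boldsymbol{z}})^\top$ is the covariance of the uniform distribution on $\mathcal{Z}$. *)

(* Defs.v *)
From mathcomp Require Import all_boot all_order all_algebra.
Set Implicit Arguments. Unset Strict Implicit. Unset Printing Implicit Defensive.
Import Order.TTheory GRing.Theory Num.Theory.
Local Open Scope ring_scope.

(* Average of the points z_i, i in I (0 when I is empty; never used then
   with a nonzero weight). *)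
Definition setavg (R : realFieldType) (N d : nat) (z : 'I_N -> 'cV[R]_d)
  (I : {set 'I_N}) : 'cV[R]_d :=
  (#|I|%:R)^-1 *: \sum_(i in I) z i.

Definition mean (R : realFieldType) (N d : nat) (z : 'I_N -> 'cV[R]_d)
  : 'cV[R]_d := (N%:R)^-1 *: \sum_(i < N) z i.

Definition Cov (R : realFieldType) (N d : nat) (z : 'I_N -> 'cV[R]_d)
  : 'M[R]_d :=
  (N%:R)^-1 *: \sum_(i < N) ((z i - mean z) *m (z i - mean z)^T).

Definition E_UV (R : realFieldType) (N d b k : nat)
  (f : {set 'I_N} -> {set 'I_N} -> 'M[R]_d) : 'M[R]_d :=
  ((#|[set U : {set 'I_N} | #|U| == b]| * #|[set V : {set 'I_N} | #|V| == k]|)%:R)^-1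
  *: \sum_(U : {set 'I_N} | #|U| == b) \sum_(V : {set 'I_N} | #|V| == k) f U V.

(* Main.v *)
Require Import Defs.
From mathcomp Require Import all_boot all_order all_algebra.
From mathcomp Require Import ring zify.
Import Order.TTheory GRing.Theory Num.Theory.
Local Open Scope ring_scope.

Lemma sqmx (R : fieldType) d (k : R) (w : 'cV[R]_d) :
  (k *: w) *m (k *: w)^T = k^+2 *: (w *m w^T).
Proof. by rewrite linearZ /= -scalemxAl -scalemxAr scalerA expr2. Qed.

Lemma sumV (M : zmodType) (N : nat) (F : {set 'I_N} -> M) (hN : (1 <= N)%N) :
  \sum_(V : {set 'I_N} | #|V| == N.-1) F V = \sum_(j : 'I_N) F (~: [set j]).
Proof.
have inj : {in [set: 'I_N] &, injective (fun j : 'I_N => ~: [set j])}.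
  by move=> i j _ _ /setC_inj /set1_inj.
transitivity (\sum_(j in [set: 'I_N]) F (~:[set j])); last first.
  by apply: eq_bigl => j; rewrite inE.
rewrite -(big_imset _ inj); apply: eq_bigl => V.
apply/idP/imsetP.
- move=> /eqP hV.
  have : #|~: V| == 1%N.
    have := cardsC V; rewrite card_ord hV => h; apply/eqP; lia.
  case/cards1P => j hj; exists j; first by rewrite inE.
  by rewrite -hj setCK.
- by case=> j _ ->; rewrite cardsC1 card_ord.
Qed.

Lemma countU (N b : nat) (j : 'I_N) (hb1 : (1 <= b)%N) (hbN : (b <= N)%N) :
  (#|[set U : {set 'I_N} | (#|U| == b) && (j \in U)]| * N = b * 'C(N, b))%N.
Proof.
have h1 := cardsID [set U : {set 'I_N} | j \in U] [set U : {set 'I_N} | #|U| == b].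
rewrite card_draws card_ord in h1.
have h2 : #|[set U : {set 'I_N} | #|U| == b] :\: [set U : {set 'I_N} | j \in U]|
          = 'C(N.-1, b).
  rewrite -[in RHS](card_ord N) -(cardsC1 j) -cards_draws; apply: eq_card => U.
  rewrite !inE; congr (_ && _).
  apply/idP/subsetP.
  - by move=> hj i hi; rewrite !inE; apply/eqP => eij; by move: hi; rewrite eij (negbTE hj).
  - by move=> h; apply/negP => /h; rewrite !inE eqxx.
have h3 : #|[set U : {set 'I_N} | (#|U| == b) && (j \in U)]| =
          #|[set U : {set 'I_N} | #|U| == b] :&: [set U : {set 'I_N} | j \in U]|.
  by apply: eq_card => U; rewrite !inE.
rewrite h3.
move: h1; rewrite h2; clear h2 h3.
case: N j hbN => [|n] j hbN; first by case: j.
case: b hb1 hbN => [|m] // _ hbN.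
move=> h1; rewrite binS /= in h1; move: h1.
rewrite [X in X = _ -> _]addnC => /addnI ->.
by rewrite mulnC (mul_bin_diag n.+1 m).
Qed.

Lemma avgC (R : realFieldType) (N d : nat) (z : 'I_N -> 'cV[R]_d) (j : 'I_N)
  (hN : (2 <= N)%N) :
  setavg z (~: [set j]) - z j = - ((N%:R / (N.-1)%:R) *: (z j - mean z)).
Proof.
rewrite /setavg cardsC1 card_ord /mean.
have hS : \sum_(i in ~: [set j]) z i = \sum_(i < N) z i - z j.
  rewrite [in RHS](bigD1 j) //= addrC addrK; apply: eq_bigl => i.
  by rewrite !inE.
rewrite hS; set S := \sum_(i < N) z i.
have ha : (N.-1)%:R != 0 :> R by rewrite pnatr_eq0; lia.
have hn0 : N%:R != 0 :> R by rewrite pnatr_eq0; lia.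
have hn : N%:R = (N.-1)%:R + 1 :> R by rewrite natr1 prednK //; lia.
have e1 : N%:R / (N.-1)%:R * (N%:R)^-1 = ((N.-1)%:R)^-1 :> R by field; rewrite ha hn0.
have e2 : N%:R / (N.-1)%:R = ((N.-1)%:R)^-1 + 1 :> R by rewrite hn; field; rewrite -?hn ?ha ?hn0.
rewrite !scalerBr scalerA e1 e2 scalerDl scale1r.
by rewrite opprB opprD addrA.
Qed.

Lemma pointU (R : realFieldType) (N d b : nat) (z : 'I_N -> 'cV[R]_d)
  (hN : (2 <= N)%N) (hb1 : (1 <= b)%N) (j : 'I_N) (U : {set 'I_N})
  (hU : #|U| = b) :
  ((b%:R - #|U :&: ~: [set j]|%:R) ^+ 2 / (b%:R) ^+ 2) *:
       ((setavg z (~: [set j]) - setavg z (U :&: ~: ~: [set j])) *m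
        (setavg z (~: [set j]) - setavg z (U :&: ~: ~: [set j]))^T)
  = (j \in U)%:R *: ((((b%:R) ^+ 2)^-1 * (N%:R / (N.-1)%:R) ^+ 2) *:
       ((z j - mean z) *m (z j - mean z)^T)).
Proof.
have hc := cardsD1 j U; rewrite setDE hU in hc.
rewrite setCK.
have hb0 : b%:R != 0 :> R by rewrite pnatr_eq0; lia.
case: (boolP (j \in U)) => hj; last first.
  rewrite (negbTE hj) add0n in hc; rewrite -hc subrr expr0n /= mul0r !scale0r //.
have hI : U :&: [set j] = [set j] by apply/setIidPr; rewrite sub1set.
rewrite hI.
have -> : setavg z [set j] = z j by rewrite /setavg cards1 big_set1 invr1 scale1r.
rewrite avgC // -scaleNr sqmx sqrrN !scalerA /= mul1r.
congr (_ *: _).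
have -> : b%:R = #|U :&: ~: [set j]|%:R + 1 :> R by rewrite hc hj add1n -natr1.
by rewrite addrAC subrr add0r expr1n mul1r.
Qed.

Theorem lemma6 (R : realFieldType) (N d b : nat) (z : 'I_N -> 'cV[R]_d)
  (hN : (2 <= N)%N) (hb1 : (1 <= b)%N) (hbN : (b <= N)%N) :
  @E_UV R N d b N.-1
    (fun U V =>
       ((b%:R - #|U :&: V|%:R) ^+ 2 / (b%:R) ^+ 2) *:
       ((setavg z V - setavg z (U :&: ~: V)) *m
        (setavg z V - setavg z (U :&: ~: V))^T))
  = ((N * b)%:R)^-1 * (N%:R / (N.-1)%:R) ^+ 2 *: Cov z.
Proof.
have hN0 : N%:R != 0 :> R by rewrite pnatr_eq0; lia.
have hN1 : (N.-1)%:R != 0 :> R by rewrite pnatr_eq0; lia.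
have hb0 : b%:R != 0 :> R by rewrite pnatr_eq0; lia.
have hC0 : 'C(N, b)%:R != 0 :> R by rewrite pnatr_eq0 -lt0n bin_gt0.
rewrite /E_UV card_draws card_ord.
have hV : #|[set V : {set 'I_N} | #|V| == N.-1]| = N.
  by rewrite card_draws card_ord -subn1 bin_sub ?bin1 //; lia.
rewrite hV exchange_big /= sumV; last lia.
set K := (((b%:R) ^+ 2)^-1 * (N%:R / (N.-1)%:R) ^+ 2) : R.
rewrite (eq_bigr (fun j => (((b * 'C(N, b))%:R / N%:R) * K) *:
   ((z j - mean z) *m (z j - mean z)^T))); last first.
  move=> j _.
  rewrite (eq_bigr (fun U : {set 'I_N} => (j \in U)%:R *: (K *:
       ((z j - mean z) *m (z j - mean z)^T)))); last first.
    by move=> U /eqP hU; rewrite (pointU _ _ _ _ _ hN hb1).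
  rewrite -scaler_suml -scalerA; congr (_ *: _).
  rewrite -natr_sum.
  rewrite (eq_bigr (fun U : {set 'I_N} => if j \in U then 1%N else 0%N)); last first.
    by move=> U _; case: (j \in U).
  rewrite -big_mkcondr sum1dep_card.
  have hc := countU _ _ j hb1 hbN.
  apply: (mulIf hN0); rewrite mulfVK // -natrM hc //.
rewrite /Cov -scaler_sumr !scalerA; congr (_ *: _).
rewrite /K !natrM; field.
by rewrite hN0 hN1 hb0 hC0.
Qed.
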